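(* Let $S$ be a nonempty compact convex set in the plane and fix $0<\alpha<\pi$. Then there exist a point $O$ in the plane and two rays $q$ and $r$ emanating from $O$ and forming an angle $\alpha$, such that $S$ is contained in the closed convex wedge bounded by $q$ and $r$, the ray $q$ meets $S$ in exactly one point $X$, the ray $r$ meets $S$ in exactly one point $Y$, and $|OX|=|OY|$. *)

(* Defs.v *)
From Stdlib Require Import Reals.
Open Scope R_scope.

Definition pt := (R * R)%type.

Definition padd (p q : pt) : pt := (fst p + fst q, snd p + snd q).
Definition pscale (a : R) (p : pt) : pt := (a * fst p, a * snd p).
Definition dot (p q : pt) : R := fst p * fst q + snd p * snd q.
Definition pdist (p q : pt) : R := sqrt ((fst p - fst q) ^ 2 + (snd p - snd q) ^ 2).
Definition unit_vec (u : pt) : Prop := dot u u = 1.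

(* Compactness in R^2 = closed and bounded (Heine–Borel). *)
Definition bounded (S : pt -> Prop) : Prop :=
  exists M : R, forall p, S p -> pdist p (0, 0) <= M.
Definition closed (S : pt -> Prop) : Prop :=
  forall p, (forall eps, eps > 0 -> exists q, S q /\ pdist p q < eps) -> S p.
Definition compact2 (S : pt -> Prop) : Prop := closed S /\ bounded S.

Definition convex (S : pt -> Prop) : Prop :=
  forall p q (t : R), S p -> S q -> 0 <= t <= 1 ->
    S (padd (pscale (1 - t) p) (pscale t q)).

Definition ray (O u : pt) (p : pt) : Prop :=
  exists s, 0 <= s /\ p = padd O (pscale s u).

Definition wedge (O u v : pt) (p : pt) : Prop :=
  exists s t, 0 <= s /\ 0 <= t /\ p = padd O (padd (pscale s u) (pscale t v)).

(* Main.v *)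
Require Import Defs.
From Stdlib Require Import Reals Lra Lia Psatz Classical IndefiniteDescription.
Open Scope R_scope.

Lemma sup_ex (E : R -> Prop) : (exists x, E x) -> (exists b, forall x, E x -> x <= b) ->
  exists s, (forall x, E x -> x <= s) /\ (forall b, (forall x, E x -> x <= b) -> s <= b).
Proof.
  intros Hne [b Hb].
  assert (Hbd : bound E) by (exists b; exact Hb).
  destruct (completeness E Hbd Hne) as [s [H1 H2]].
  exists s; split; [exact H1| exact H2].
Qed.

Lemma bounded_coords (S : pt -> Prop) : Defs.bounded S ->
  exists M, 0 <= M /\ forall p, S p -> Rabs (fst p) <= M /\ Rabs (snd p) <= M.
Proof.
  intros [M HM].
  exists (Rabs M); split; [apply Rabs_pos|].
  intros p Hp. specialize (HM p Hp). unfold pdist in HM. simpl in HM.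
  replace (fst p - 0) with (fst p) in HM by ring.
  replace (snd p - 0) with (snd p) in HM by ring.
  assert (H1 : Rabs (fst p) <= sqrt (fst p ^ 2 + snd p ^ 2)).
  { rewrite <- sqrt_Rsqr_abs. apply sqrt_le_1_alt. unfold Rsqr. nra. }
  assert (H2 : Rabs (snd p) <= sqrt (fst p ^ 2 + snd p ^ 2)).
  { rewrite <- sqrt_Rsqr_abs. apply sqrt_le_1_alt. unfold Rsqr. nra. }
  split; eapply Rle_trans; eauto; eapply Rle_trans; eauto; apply RRle_abs.
Qed.

Lemma Rabs_le_between x M : Rabs x <= M -> -M <= x <= M.
Proof. unfold Rabs; destruct (Rcase_abs x); intros; lra. Qed.

Lemma abs_le1 a b : a^2 + b^2 = 1 -> Rabs a <= 1.
Proof.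
  intros H. apply Rabs_le. split; nra.
Qed.

Lemma lin_bound a b M x y : a^2+b^2 = 1 -> Rabs x <= M -> Rabs y <= M ->
  Rabs (a*x + b*y) <= 2*M.
Proof.
  intros H Hx Hy.
  assert (Ha := abs_le1 a b H).
  assert (Hb : Rabs b <= 1) by (apply (abs_le1 b a); lra).
  eapply Rle_trans; [apply Rabs_triang|].
  rewrite !Rabs_mult.
  assert (0 <= Rabs x) by apply Rabs_pos.
  assert (0 <= Rabs y) by apply Rabs_pos.
  assert (0 <= Rabs a) by apply Rabs_pos.
  assert (0 <= Rabs b) by apply Rabs_pos.
  nra.
Qed.

Lemma minimizer (S : pt -> Prop) (M : R) :
  (forall p, S p -> Rabs (fst p) <= M /\ Rabs (snd p) <= M) -> Defs.closed S -> (exists p, S p) ->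
  forall a b, a^2 + b^2 = 1 ->
  exists p, S p /\ forall q, S q -> a*fst p + b*snd p <= a*fst q + b*snd q.
Proof.
  intros HM Hcl [p0 Hp0] a b Hab.
  set (f := fun q : pt => a * fst q + b * snd q).
  set (g := fun q : pt => - b * fst q + a * snd q).
  assert (Hf : forall q, S q -> Rabs (f q) <= 2*M).
  { intros q Hq; destruct (HM q Hq); unfold f; apply lin_bound; auto. }
  assert (Hg : forall q, S q -> Rabs (g q) <= 2*M).
  { intros q Hq; destruct (HM q Hq); unfold g.
    replace (- b * fst q) with ((-b) * fst q) by ring. apply lin_bound; auto. nra. }
  destruct (sup_ex (fun y => forall q, S q -> y <= f q)) as [m0 [Hm1 Hm2]].
  { exists (-(2*M)). intros q Hq. specialize (Hf q Hq). apply Rabs_le_between in Hf. lra. }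
  { exists (f p0). intros x Hx. apply Hx; auto. }
  assert (Hlow : forall q, S q -> m0 <= f q).
  { intros q Hq. apply Hm2. intros x Hx. apply Hx; auto. }
  assert (Happ : forall eta, eta > 0 -> exists q, S q /\ f q < m0 + eta).
  { intros eta He. apply NNPP. intros Hn.
    assert (m0 + eta <= m0); [|lra].
    apply Hm1. intros q Hq. apply Rnot_lt_le. intros Hl. apply Hn. exists q; auto. }
  destruct (sup_ex (fun y => exists d, d > 0 /\ forall q, S q -> f q <= m0 + d -> y <= g q))
    as [as_ [Ha1 Ha2]].
  { exists (-(2*M)), 1. split; [lra|]. intros q Hq _. specialize (Hg q Hq).
    apply Rabs_le_between in Hg. lra. }
  { exists (2*M). intros y [d [Hd Hy]].
    destruct (Happ d Hd) as [q [Hq Hq2]].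
    specialize (Hy q Hq (Rlt_le _ _ Hq2)). specialize (Hg q Hq).
    apply Rabs_le_between in Hg. lra. }
  set (ps := (m0 * a - as_ * b, m0 * b + as_ * a)).
  exists ps. split.
  - apply Hcl. intros eta Heta.
    set (e := eta / 2).
    assert (He : e > 0) by (unfold e; lra).
    assert (Hy : exists y, (exists d, d > 0 /\ forall q, S q -> f q <= m0 + d -> y <= g q) /\ as_ - e < y).
    { apply NNPP. intros Hn.
      assert (as_ <= as_ - e); [|lra].
      apply Ha2. intros x Hx. apply Rnot_lt_le. intros Hl. apply Hn. exists x; auto. }
    destruct Hy as [y [[d [Hd Hyd]] Hy2]].
    set (d' := Rmin d e).
    assert (Hd' : d' > 0) by (unfold d'; apply Rmin_glb_lt; lra).
    assert (Hq : exists q, S q /\ f q <= m0 + d' /\ g q < as_ + e).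
    { apply NNPP. intros Hn.
      assert (as_ + e <= as_); [|lra].
      apply Ha1. exists d'. split; auto. intros q Hq Hfq.
      apply Rnot_lt_le. intros Hl. apply Hn. exists q; auto. }
    destruct Hq as [q [HSq [Hfq Hgq]]].
    exists q. split; auto.
    assert (Hd1 : d' <= d) by apply Rmin_l.
    assert (Hd2 : d' <= e) by apply Rmin_r.
    assert (Hgq2 : y <= g q) by (apply Hyd; auto; lra).
    assert (Hfq2 : m0 <= f q) by (apply Hlow; auto).
    unfold pdist, ps; simpl.
    assert (Hid : (m0 * a - as_ * b - fst q) ^ 2 + (m0 * b + as_ * a - snd q) ^ 2
                  = (m0 - f q)^2 + (as_ - g q)^2).
    { unfold f, g; cbv beta.
      assert (Hz : forall x y : R, x - y = 0 -> x = y) by (intros; lra).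
      apply Hz.
      transitivity ((m0^2 + as_^2 - (fst q ^2 + snd q^2))*(a^2+b^2-1)).
      - ring.
      - rewrite Hab. ring. }
    match goal with |- sqrt ?z < _ => replace z with ((m0 - f q)^2 + (as_ - g q)^2) by (rewrite <- Hid; simpl; ring) end.
    rewrite <- (sqrt_pow2 eta) by lra. idtac.
    apply sqrt_lt_1_alt. split; [apply Rplus_le_le_0_compat; apply pow2_ge_0|].
    unfold e in *. nra.
  - intros q Hq. fold (f q).
    replace (a * fst ps + b * snd ps) with (m0 * (a^2+b^2)) by (unfold ps; simpl; ring).
    rewrite Hab. rewrite Rmult_1_r. apply Hlow; auto.
Qed.
Lemma dshift f x b l : derivable_pt_lim f (x+b) l -> derivable_pt_lim (fun y => f (y+b)) x l.
Proof.
  unfold derivable_pt_lim. intros Hf eps He. destruct (Hf eps He) as [d Hd].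
  exists d. intros h H1 H2. replace (x + h + b) with (x + b + h) by ring. apply Hd; auto.
Qed.



Lemma cshift f x b : continuity_pt f (x+b) -> continuity_pt (fun y => f (y+b)) x.
Proof.
  intros Hf.
  apply (continuity_pt_comp (fun y => y + b) f x); auto.
  apply continuity_pt_plus; [apply derivable_continuous_pt; apply derivable_pt_id | apply continuity_pt_const; intros u v; auto].
Qed.

Lemma dlin (p1 p2 x : R) : derivable_pt_lim (fun y => cos y * p1 + sin y * p2) x (- sin x * p1 + cos x * p2).
Proof.
  apply (derivable_pt_lim_plus (fun y => cos y * p1) (fun y => sin y * p2)).
  - apply derivable_pt_lim_scal_right. apply derivable_pt_lim_cos.
  - apply derivable_pt_lim_scal_right. apply derivable_pt_lim_sin.
Qed.

Lemma cont_lip (f : R -> R) K x : 0 <= K ->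
  (forall y, Rabs (f y - f x) <= K * (Rabs (cos y - cos x) + Rabs (sin y - sin x))) ->
  continuity_pt f x.
Proof.
  intros HK Hf.
  assert (Hc := continuity_cos x). assert (Hs := continuity_sin x).
  unfold continuity_pt, continue_in, limit1_in, limit_in in *. simpl in *. unfold R_dist in *.
  intros eps He.
  set (e := eps / (2 * (K + 1))).
  assert (He' : e > 0) by (unfold e; apply Rdiv_lt_0_compat; lra).
  destruct (Hc e He') as [d1 [Hd1 H1]].
  destruct (Hs e He') as [d2 [Hd2 H2]].
  exists (Rmin d1 d2). split. { apply Rmin_glb_lt; lra. }
  intros y [Hy1 Hy2].
  assert (Hy3 : Rabs (y - x) < d1) by (eapply Rlt_le_trans; [exact Hy2| apply Rmin_l]).
  assert (Hy4 : Rabs (y - x) < d2) by (eapply Rlt_le_trans; [exact Hy2| apply Rmin_r]).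
  specialize (H1 y (conj Hy1 Hy3)). specialize (H2 y (conj Hy1 Hy4)).
  eapply Rle_lt_trans; [apply Hf|].
  assert (Hk : K * (Rabs (cos y - cos x) + Rabs (sin y - sin x)) <= K * (2*e)).
  { apply Rmult_le_compat_l; lra. }
  assert (K * (2 * e) < eps).
  { unfold e. field_simplify; [|lra]. apply Rmult_lt_reg_r with (K+1); [lra|].
    field_simplify; lra. }
  lra.
Qed.
Lemma by_comb (L R d : R) : d = 0 -> L - R = d -> L = R.
Proof. intros; lra. Qed.

Lemma by_comb_mul (sa L R d : R) : sa <> 0 -> d = 0 -> sa * (L - R) = d -> L = R.
Proof.
  intros Hs Hd H. rewrite Hd in H. apply Rmult_integral in H. destruct H; [contradiction|lra].
Qed.

Lemma alg_CD (A B C D ca sa h1 h2 c0 : R) (HAB : A^2 + B^2 = 1) (Hcs : ca^2 + sa^2 = 1) (Hsa : sa <> 0) (HC : C = -ca*A + sa*B) (HD : D = -ca*B - sa*A) (Hc0 : sa*c0 = -ca*h1 - h2) : C^2 + D^2 = 1.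
Proof.
  subst C D. apply (by_comb _ _ ((ca^2+sa^2-1)*(A^2+B^2) + (A^2+B^2-1))).
  - assert (E1 : A^2+B^2-1 = 0) by lra. assert (E2 : ca^2+sa^2-1 = 0) by lra.
    rewrite E1, E2. ring.
  - ring.
Qed.

Lemma alg_uv (A B C D ca sa h1 h2 c0 : R) (HAB : A^2 + B^2 = 1) (Hcs : ca^2 + sa^2 = 1) (Hsa : sa <> 0) (HC : C = -ca*A + sa*B) (HD : D = -ca*B - sa*A) (Hc0 : sa*c0 = -ca*h1 - h2) : B * (- D) + (- A) * C = ca.
Proof.
  subst C D. apply (by_comb _ _ (ca*(A^2+B^2-1))).
  - assert (E1 : A^2+B^2-1 = 0) by lra. rewrite E1; ring.
  - ring.
Qed.

Lemma alg_decomp (A B C D ca sa h1 h2 c0 : R) (HAB : A^2 + B^2 = 1) (Hcs : ca^2 + sa^2 = 1) (Hsa : sa <> 0) (HC : C = -ca*A + sa*B) (HD : D = -ca*B - sa*A) (Hc0 : sa*c0 = -ca*h1 - h2) (s t p1 p2 : R) :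
  sa*s = C*p1 + D*p2 - h2 -> sa*t = A*p1 + B*p2 - h1 ->
  p1 = h1*A - c0*B + (s*B + t*(-D)) /\ p2 = h1*B + c0*A + (s*(-A) + t*C).
Proof.
  intros Hs Ht. subst C D.
  assert (E1 : A^2+B^2-1 = 0) by lra.
  assert (ec0 : sa*c0 - (-ca*h1 - h2) = 0) by lra.
  assert (es : sa*s - ((-ca*A+sa*B)*p1 + (-ca*B-sa*A)*p2 - h2) = 0) by lra.
  assert (et : sa*t - (A*p1+B*p2-h1) = 0) by lra.
  split.
  - symmetry. apply (by_comb_mul sa _ _ (-B*(sa*c0 - (-ca*h1 - h2)) + B*(sa*s - ((-ca*A+sa*B)*p1 + (-ca*B-sa*A)*p2 - h2))
          - (-ca*B-sa*A)*(sa*t - (A*p1+B*p2-h1)) + sa*p1*(A^2+B^2-1))); auto.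
    + rewrite E1, ec0, es, et. ring.
    + ring.
  - symmetry. apply (by_comb_mul sa _ _ (A*(sa*c0 - (-ca*h1 - h2)) - A*(sa*s - ((-ca*A+sa*B)*p1 + (-ca*B-sa*A)*p2 - h2))
          + (-ca*A+sa*B)*(sa*t - (A*p1+B*p2-h1)) + sa*p2*(A^2+B^2-1))); auto.
    + rewrite E1, ec0, es, et. ring.
    + ring.
Qed.

Lemma alg_rayu (A B C D ca sa h1 h2 c0 : R) (HAB : A^2 + B^2 = 1) (Hcs : ca^2 + sa^2 = 1) (Hsa : sa <> 0) (HC : C = -ca*A + sa*B) (HD : D = -ca*B - sa*A) (Hc0 : sa*c0 = -ca*h1 - h2) (s : R) : A * (h1*A - c0*B + s*B) + B * (h1*B + c0*A + s*(-A)) = h1.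
Proof.
  apply (by_comb _ _ (h1*(A^2+B^2-1))).
  - assert (E1 : A^2+B^2-1 = 0) by lra. rewrite E1; ring.
  - ring.
Qed.

Lemma alg_rayv (A B C D ca sa h1 h2 c0 : R) (HAB : A^2 + B^2 = 1) (Hcs : ca^2 + sa^2 = 1) (Hsa : sa <> 0) (HC : C = -ca*A + sa*B) (HD : D = -ca*B - sa*A) (Hc0 : sa*c0 = -ca*h1 - h2) (t : R) : C * (h1*A - c0*B + t*(-D)) + D * (h1*B + c0*A + t*C) = h2.
Proof.
  subst C D.
  apply (by_comb _ _ (-(ca*h1 + sa*c0)*(A^2+B^2-1) - (sa*c0 - (-ca*h1 - h2)))).
  - assert (E1 : A^2+B^2-1 = 0) by lra. assert (ec0 : sa*c0 - (-ca*h1 - h2) = 0) by lra.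
    rewrite E1, ec0; ring.
  - ring.
Qed.

Lemma alg_eqdist (A B C D ca sa h1 h2 c0 : R) (HAB : A^2 + B^2 = 1) (Hcs : ca^2 + sa^2 = 1) (Hsa : sa <> 0) (HC : C = -ca*A + sa*B) (HD : D = -ca*B - sa*A) (Hc0 : sa*c0 = -ca*h1 - h2) (X1 X2 Y1 Y2 s t : R) :
  h1 = A*X1 + B*X2 -> h2 = C*Y1 + D*Y2 ->
  (1 - ca) * (h1 - h2) - sa * ((- B * X1 + A * X2) + (- D * Y1 + C * Y2)) = 0 ->
  sa*s = C*X1 + D*X2 - h2 -> sa*t = A*Y1 + B*Y2 - h1 -> s = t.
Proof.
  intros HX HY K Hs Ht.
  apply (by_comb_mul sa s t 0 Hsa eq_refl).
  { rewrite Rmult_minus_distr_l, Hs, Ht. subst C D.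
    apply (by_comb _ _ ((1 - ca) * (h1 - h2) - sa * ((- B * X1 + A * X2) + (- (-ca*B - sa*A) * Y1 + (-ca*A + sa*B) * Y2))
       + ca*(h1 - (A*X1+B*X2)) - ca*(h2 - ((-ca*A + sa*B)*Y1 + (-ca*B - sa*A)*Y2)) + (A*Y1+B*Y2)*(ca^2+sa^2-1))).
    + assert (E2 : ca^2+sa^2-1 = 0) by lra.
      assert (eX : h1 - (A*X1+B*X2) = 0) by lra.
      assert (eY : h2 - ((-ca*A + sa*B)*Y1 + (-ca*B - sa*A)*Y2) = 0) by lra.
      rewrite K, E2, eX, eY. ring.
    + ring. }
Qed.


Lemma alg_uniq (A B p1 p2 X1 X2 : R) : A^2+B^2 = 1 ->
  A*p1 + B*p2 = A*X1 + B*X2 -> -B*p1 + A*p2 = -B*X1 + A*X2 -> p1 = X1 /\ p2 = X2.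
Proof.
  intros E Hl Ht.
  assert (E1 : A^2+B^2-1 = 0) by lra.
  assert (e1 : A*p1 + B*p2 - (A*X1 + B*X2) = 0) by lra.
  assert (e2 : -B*p1 + A*p2 - (-B*X1 + A*X2) = 0) by lra.
  split.
  - apply (by_comb _ _ (A*(A*p1 + B*p2 - (A*X1 + B*X2)) - B*(-B*p1 + A*p2 - (-B*X1 + A*X2)) - (p1 - X1)*(A^2+B^2-1))).
    + rewrite E1, e1, e2; ring.
    + ring.
  - apply (by_comb _ _ (B*(A*p1 + B*p2 - (A*X1 + B*X2)) + A*(-B*p1 + A*p2 - (-B*X1 + A*X2)) - (p2 - X2)*(A^2+B^2-1))).
    + rewrite E1, e1, e2; ring.
    + ring.
Qed.
Theorem lemma2 (S : pt -> Prop) (alpha : R) :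
  (exists p, S p) -> compact2 S -> convex S ->
  0 < alpha < PI ->
  exists (P0 u v X Y : pt),
    unit_vec u /\ unit_vec v /\ dot u v = cos alpha /\
    (forall p, S p -> wedge P0 u v p) /\
    (forall p, (ray P0 u p /\ S p) <-> p = X) /\
    (forall p, (ray P0 v p /\ S p) <-> p = Y) /\
    pdist P0 X = pdist P0 Y.
Proof.
  intros [p0 Hp0] [Hcl Hbd] _ [Ha1 Ha2].
  destruct (bounded_coords S Hbd) as [M [HM0 HM]].
  assert (Hmin : forall y, exists p, S p /\ forall q, S q ->
            cos y * fst p + sin y * snd p <= cos y * fst q + sin y * snd q).
  { intro y. apply (minimizer S M HM Hcl (ex_intro _ p0 Hp0)).
    pose proof (sin2_cos2 y) as E. unfold Rsqr in E. lra. }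
  destruct (functional_choice _ Hmin) as [pm Hpm].
  set (lin := fun y (q : pt) => cos y * fst q + sin y * snd q).
  set (H := fun y => lin y (pm y)).
  assert (HHle : forall y q, S q -> H y <= lin y q).
  { intros y q Hq. unfold H, lin. apply (proj2 (Hpm y)); auto. }
  assert (HS : forall y, S (pm y)) by (intro y; apply (proj1 (Hpm y))).
  assert (Hab : forall a z, Rabs z <= M -> a * z <= Rabs a * M).
  { intros a z Hz. eapply Rle_trans; [apply RRle_abs|]. rewrite Rabs_mult.
    apply Rmult_le_compat_l; auto. apply Rabs_pos. }
  assert (HHlip : forall x y, Rabs (H y - H x) <= M * (Rabs (cos y - cos x) + Rabs (sin y - sin x))).
  { intros x y. apply Rabs_le. split.
    - assert (H1 := HHle x (pm y) (HS y)). unfold H, lin in *.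
      destruct (HM _ (HS y)) as [Hm1 Hm2].
      assert (T1 := Hab (cos x - cos y) _ Hm1). assert (T2 := Hab (sin x - sin y) _ Hm2).
      rewrite (Rabs_minus_sym (cos x)) in T1. rewrite (Rabs_minus_sym (sin x)) in T2.
      nra.
    - assert (H1 := HHle y (pm x) (HS x)). unfold H, lin in *.
      destruct (HM _ (HS x)) as [Hm1 Hm2].
      assert (T1 := Hab (cos y - cos x) _ Hm1). assert (T2 := Hab (sin y - sin x) _ Hm2).
      nra. }
  assert (HHc : forall x, continuity_pt H x).
  { intro x. apply (cont_lip H M x HM0). intro y. apply HHlip. }
  assert (HHper : forall y, H (y + 2*PI) = H y).
  { assert (Hl : forall y q, lin (y + 2*PI) q = lin y q).
    { intros y q. unfold lin. rewrite cos_plus, sin_plus, cos_2PI, sin_2PI. ring. }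
    intro y. apply Rle_antisym.
    - unfold H at 2. rewrite <- (Hl y (pm y)). apply HHle; auto.
    - unfold H at 2. rewrite Hl. apply HHle; auto. }
  assert (hab : -20 <= 20) by lra.
  set (F := primitive hab (FTC_P1 hab (fun x _ => HHc x))).
  assert (dF : forall x, -20 <= x <= 20 -> derivable_pt_lim F x (H x)).
  { intros x Hx. apply RiemannInt_P28. auto. }
  pose proof PI2_1 as Hpi3. pose proof PI_4 as Hpi4.
  set (be := alpha - PI).
  set (ca := cos alpha). set (sa := sin alpha).
  assert (Hsa : 0 < sa) by (apply sin_gt_0; auto).
  assert (Hcs : ca^2 + sa^2 = 1) by (pose proof (sin2_cos2 alpha) as E; unfold Rsqr in E; unfold ca, sa; lra).
  assert (Hca : ca < 1) by nra.
  set (J := fun y => F y - F (y + be)).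
  assert (dJ : forall y, -6 <= y <= 8 -> derivable_pt_lim J y (H y - H (y + be))).
  { intros y Hy. apply (derivable_pt_lim_minus F (fun z => F (z + be))).
    - apply dF; lra.
    - apply dshift. apply dF. unfold be; lra. }
  set (Phi := fun y => (1 - ca) * J y - sa * (H y + H (y + be))).
  assert (HPc : forall y, -6 <= y <= 8 -> continuity_pt Phi y).
  { intros y Hy. unfold Phi.
    apply (continuity_pt_minus (fun z => (1 - ca) * J z) (fun z => sa * (H z + H (z + be)))).
    - apply (continuity_pt_mult (fun _ => 1 - ca) J).
      + apply continuity_pt_const. intros a b; auto.
      + apply derivable_continuous_pt. exists (H y - H (y + be)). apply dJ; auto.
    - apply (continuity_pt_mult (fun _ => sa) (fun z => H z + H (z + be))).
      + apply continuity_pt_const. intros a b; auto.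
      + apply (continuity_pt_plus H (fun z => H (z + be))); auto.
        apply cshift. auto. }
  assert (HP : forall y1 y2, -6 <= y1 <= 2 -> -6 <= y2 <= 2 ->
             F (y1 + 2*PI) - F y1 = F (y2 + 2*PI) - F y2).
  { assert (Hw : forall y1 y2, -6 <= y1 -> y1 < y2 -> y2 <= 2 ->
               F (y1 + 2*PI) - F y1 = F (y2 + 2*PI) - F y2).
    { intros y1 y2 H1 H12 H2.
      destruct (MVT_cor2 (fun y => F (y + 2*PI) - F y) (fun y => H (y + 2*PI) - H y) y1 y2 H12)
        as [c [Hc1 Hc2]].
      - intros c Hc. apply (derivable_pt_lim_minus (fun y => F (y + 2*PI)) F).
        + apply dshift. apply dF. lra.
        + apply dF. lra.
      - rewrite HHper in Hc1. lra. }
    intros y1 y2 H1 H2. destruct (Rtotal_order y1 y2) as [Hl|[He|Hg]].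
    - apply Hw; lra.
    - subst; reflexivity.
    - symmetry. apply Hw; lra. }
  assert (HPhiper : forall y, -2 <= y <= 2 -> Phi (y + 2*PI) = Phi y).
  { intros y Hy. unfold Phi, J.
    replace (y + 2*PI + be) with ((y + be) + 2*PI) by ring.
    rewrite !HHper.
    assert (E := HP y (y + be) ltac:(lra) ltac:(unfold be; lra)).
    replace (F (y + 2 * PI) - F (y + be + 2 * PI)) with (F y - F (y + be)) by lra.
    reflexivity. }
  destruct (continuity_ab_maj Phi 0 (2*PI) ltac:(lra) ltac:(intros; apply HPc; lra))
    as [c [Hmax Hc]].
  assert (Hloc : forall x, c - 1 < x -> x < c + 1 -> Phi x <= Phi c).
  { intros x H1 H2. destruct (Rlt_le_dec x 0) as [Hx|Hx].
    - rewrite <- (HPhiper x) by lra. apply Hmax. lra.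
    - destruct (Rle_lt_dec x (2*PI)) as [Hx2|Hx2].
      + apply Hmax. lra.
      + replace x with ((x - 2*PI) + 2*PI) by ring. rewrite HPhiper by lra. apply Hmax. lra. }
  assert (Key : forall p q, S p -> S q -> lin c p = H c -> lin (c + be) q = H (c + be) ->
     (1 - ca) * (H c - H (c + be)) - sa * ((- sin c * fst p + cos c * snd p)
          + (- sin (c + be) * fst q + cos (c + be) * snd q)) = 0).
  { intros p q Hp Hq Hlp Hlq.
    set (Psi := fun y => (1 - ca) * J y - sa * (lin y p + lin (y + be) q)).
    assert (dPsi : derivable_pt_lim Psi c ((1 - ca) * (H c - H (c + be)) - sa * ((- sin c * fst p + cos c * snd p)
          + (- sin (c + be) * fst q + cos (c + be) * snd q)))).
    { unfold Psi.
      apply (derivable_pt_lim_minus (fun y => (1 - ca) * J y) (fun y => sa * (lin y p + lin (y + be) q))).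
      - apply (derivable_pt_lim_scal J (1 - ca)). apply dJ. lra.
      - apply (derivable_pt_lim_scal (fun y => lin y p + lin (y + be) q) sa).
        apply (derivable_pt_lim_plus (fun y => lin y p) (fun y => lin (y + be) q)).
        + unfold lin. apply dlin.
        + apply (dshift (fun y => lin y q)). unfold lin. apply dlin. }
    assert (Hle : forall y, Psi y <= Phi y).
    { intro y. unfold Psi, Phi. assert (T1 := HHle y p Hp). assert (T2 := HHle (y + be) q Hq). nra. }
    assert (Heq : Psi c = Phi c).
    { unfold Psi, Phi. rewrite Hlp, Hlq. reflexivity. }
    rewrite <- (derive_pt_eq_0 Psi c _ (exist _ _ dPsi) dPsi).
    apply (deriv_maximum Psi (c - 1) (c + 1) c); try lra.
    intros x H1 H2. rewrite Heq. eapply Rle_trans; [apply Hle| apply Hloc; auto]. }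

  set (X := pm c). set (Y := pm (c + be)).
  set (A := cos c). set (B := sin c). set (C := cos (c + be)). set (D := sin (c + be)).
  assert (HC : C = -ca*A + sa*B).
  { unfold C, A, B, be, ca, sa. rewrite cos_plus, cos_minus, sin_minus, cos_PI, sin_PI. ring. }
  assert (HD : D = -ca*B - sa*A).
  { unfold D, A, B, be, ca, sa. rewrite sin_plus, cos_minus, sin_minus, cos_PI, sin_PI. ring. }
  assert (HAB : A^2 + B^2 = 1).
  { unfold A, B. pose proof (sin2_cos2 c) as E. unfold Rsqr in E. lra. }
  assert (Hsa0 : sa <> 0) by lra.
  assert (HCD : C^2 + D^2 = 1) by (apply (alg_CD A B C D ca sa 0 0 0); auto; try lra).
  set (h1 := H c). set (h2 := H (c + be)).
  assert (Hh1 : h1 = A * fst X + B * snd X) by reflexivity.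
  assert (Hh2 : h2 = C * fst Y + D * snd Y) by reflexivity.
  set (c0 := (-ca*h1 - h2)/sa).
  assert (Hc0 : sa*c0 = -ca*h1 - h2) by (unfold c0; field; auto).
  set (P0 := (h1*A - c0*B, h1*B + c0*A)).
  set (u := (B, -A)). set (v := (-D, C)).
  set (sP := fun p : pt => (C*fst p + D*snd p - h2)/sa).
  set (tP := fun p : pt => (A*fst p + B*snd p - h1)/sa).
  assert (HsP : forall p, sa * sP p = C*fst p + D*snd p - h2) by (intro p; unfold sP; field; auto).
  assert (HtP : forall p, sa * tP p = A*fst p + B*snd p - h1) by (intro p; unfold tP; field; auto).
  assert (Hdec : forall p, p = padd P0 (padd (pscale (sP p) u) (pscale (tP p) v))).
  { intros [p1 p2]. unfold padd, pscale, P0, u, v; simpl.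
    destruct (alg_decomp A B C D ca sa h1 h2 c0 HAB Hcs Hsa0 HC HD Hc0 (sP (p1,p2)) (tP (p1,p2)) p1 p2
      (HsP (p1,p2)) (HtP (p1,p2))) as [E1 E2].
    rewrite <- E1, <- E2. reflexivity. }
  assert (Hnn : forall z, 0 <= z -> 0 <= z / sa).
  { intros z Hz. unfold Rdiv. apply Rmult_le_pos; auto. left; apply Rinv_0_lt_compat; lra. }
  assert (HsPn : forall p, S p -> 0 <= sP p).
  { intros p Hp. unfold sP. apply Hnn. assert (T := HHle (c + be) p Hp). unfold lin in T. fold C D in T.
    fold h2 in T. lra. }
  assert (HtPn : forall p, S p -> 0 <= tP p).
  { intros p Hp. unfold tP. apply Hnn. assert (T := HHle c p Hp). unfold lin in T. fold A B in T.
    fold h1 in T. lra. }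
  assert (HX : S X) by apply HS. assert (HY : S Y) by apply HS.
  assert (Face1 : forall p, S p -> A * fst p + B * snd p = h1 -> p = X).
  { intros p Hp Hl.
    assert (K1 := Key p Y Hp HY Hl (eq_sym Hh2)).
    assert (K2 := Key X Y HX HY (eq_sym Hh1) (eq_sym Hh2)).
    fold A B C D h1 h2 in K1, K2.
    assert (Ht : - B * fst p + A * snd p = - B * fst X + A * snd X).
    { apply (Rmult_eq_reg_l sa); [|lra]. lra. }
    destruct (alg_uniq A B (fst p) (snd p) (fst X) (snd X) HAB ltac:(lra) Ht) as [E1 E2].
    rewrite (surjective_pairing p), (surjective_pairing X), E1, E2. reflexivity. }
  assert (Face2 : forall p, S p -> C * fst p + D * snd p = h2 -> p = Y).
  { intros p Hp Hl.
    assert (K1 := Key X p HX Hp (eq_sym Hh1) Hl).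
    assert (K2 := Key X Y HX HY (eq_sym Hh1) (eq_sym Hh2)).
    fold A B C D h1 h2 in K1, K2.
    assert (Ht : - D * fst p + C * snd p = - D * fst Y + C * snd Y).
    { apply (Rmult_eq_reg_l sa); [|lra]. lra. }
    destruct (alg_uniq C D (fst p) (snd p) (fst Y) (snd Y) HCD ltac:(lra) Ht) as [E1 E2].
    rewrite (surjective_pairing p), (surjective_pairing Y), E1, E2. reflexivity. }
  assert (EX : X = padd P0 (pscale (sP X) u)).
  { assert (T : tP X = 0). { apply (Rmult_eq_reg_l sa); [|lra]. rewrite HtP. lra. }
    transitivity (padd P0 (padd (pscale (sP X) u) (pscale (tP X) v))); [apply Hdec|].
    rewrite T. unfold padd, pscale; simpl. f_equal; ring. }
  assert (EY : Y = padd P0 (pscale (tP Y) v)).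
  { assert (T : sP Y = 0). { apply (Rmult_eq_reg_l sa); [|lra]. rewrite HsP. lra. }
    transitivity (padd P0 (padd (pscale (sP Y) u) (pscale (tP Y) v))); [apply Hdec|].
    rewrite T. unfold padd, pscale; simpl. f_equal; ring. }
  assert (Hst : sP X = tP Y).
  { apply (alg_eqdist A B C D ca sa h1 h2 c0 HAB Hcs Hsa0 HC HD Hc0 (fst X) (snd X) (fst Y) (snd Y)); auto.
    all: try (assert (K2 := Key X Y HX HY (eq_sym Hh1) (eq_sym Hh2)); fold A B C D h1 h2 in K2; exact K2). }
  exists P0, u, v, X, Y.
  split; [|split; [|split; [|split; [|split; [|split]]]]].
  - unfold unit_vec, dot, u; simpl. lra.
  - unfold unit_vec, dot, v; simpl. lra.
  - unfold dot, u, v; simpl. apply (alg_uv A B C D ca sa 0 0 0); auto; lra.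
  - intros p Hp. exists (sP p), (tP p). split; [auto|split; [auto|apply Hdec]].
  - intros p. split.
    + intros [[s [Hs Hp]] HSp]. apply Face1; auto. rewrite Hp. unfold padd, pscale, P0, u; simpl.
      apply (alg_rayu A B C D ca sa h1 h2 c0 HAB Hcs Hsa0 HC HD Hc0).
    + intros ->. split; auto. exists (sP X). split; auto.
  - intros p. split.
    + intros [[s [Hs Hp]] HSp]. apply Face2; auto. rewrite Hp. unfold padd, pscale, P0, v; simpl.
      apply (alg_rayv A B C D ca sa h1 h2 c0 HAB Hcs Hsa0 HC HD Hc0).
    + intros ->. split; auto. exists (tP Y). split; auto.
  - rewrite EX, EY. rewrite Hst. set (t := tP Y).
    unfold pdist, padd, pscale, P0, u, v; simpl. f_equal.
    apply (by_comb _ _ (t^2*((A^2+B^2-1) - (C^2+D^2-1)))).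
    + replace (A^2+B^2-1) with 0 by lra. replace (C^2+D^2-1) with 0 by lra. ring.
    + ring.
Qed.
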